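(* Let $\mathcal I$ be an instance of the a priori TRP on a metric $(V,d)$ with root $r$, $n=|V|$, and probabilities $\{p_v\}$. Let $X=\{v\in V: p_v\ge 1/n^2\}$, $p=\frac1n\min_{v\in X}p_v$, and let $\mathcal J$ be the uniform instance on the vertex set $\bigcup_{v\in X}S_v$, where $S_v$ consists of $t_v=\lceil p_v/p\rceil$ co-located copies of $v$ (distance $0$ within $S_v$, distance $d(u,v)$ between copies of $u$ and $v$), each copy independently active with probability $p$. Suppose $\widehat\pi$ is a consecutive master tour on $\mathcal J$ (visiting each $S_v$ consecutively) whose expected latency is at most $\rho\,\mathrm{OPT}(\mathcal J)$, and let $\pi$ be the tour on $X$ visiting the vertices of $X$ in the order in which the groups $S_v$ appear in $\widehat\pi$. Then, with $A$ the random active set of $\mathcal I$, $$\mathbb{E}_A\Big[\sum_{v\in A\cap X}\mathsf{LAT}^A_\pi(v)\Big]\le(1+o(1))\left(\frac{e}{e-1}\right)^4\rho\cdot\mathrm{OPT}_X,$$ where $\mathrm{OPT}_X$ is the optimal value of the a priori TRP instance restricted to the vertices $X$, and $o(1)$ is with respect to $n\to\infty$.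
   Context: An instance of the a priori TRP consists of a finite metric $(V,d)$, a root $r$, and independent activation probabilities $p_v$. A master tour is a tour from $r$ visiting all vertices; for a random active set $A$ (each $v$ independently active with probability $p_v$), the tour is shortcut to $A$, and $\mathsf{LAT}^A_\pi(v)$ is the distance from $r$ to $v$ along the shortcut tour. The expected latency (cost) of a master tour is the expected sum of latencies of active vertices; $\mathrm{OPT}$ denotes the minimum cost over master tours. *)

(* Defs.v *)
From HB Require Import structures.
From mathcomp Require Import all_boot all_order all_algebra.
From mathcomp Require Import all_classical all_reals all_analysis.
Set Implicit Arguments. Unset Strict Implicit. Unset Printing Implicit Defensive.
Import Order.TTheory GRing.Theory Num.Theory.
Local Open Scope ring_scope.

Section APrioriTRP.
Variable R : realType.

Section Generic.
Variable T : finType.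
(* dr x = distance from the root to x;  d x y = distance between x and y *)
Variables (dr : T -> R) (d : T -> T -> R).

Fixpoint path_len (x : T) (s : seq T) : R :=
  if s is y :: s' then d x y + path_len y s' else 0.

(* distance from the root to v along the (shortcut) tour s *)
Definition latency (s : seq T) (v : T) : R :=
  if take (index v s).+1 s is x :: s' then dr x + path_len x s' else 0.

Definition is_tour (U : {set T}) (s : seq T) : Prop :=
  uniq s /\ forall x, (x \in s) = (x \in U).

Definition prob_active (U : {set T}) (q : T -> R) (A : {set T}) : R :=
  \prod_(v in U) (if v \in A then q v else 1 - q v).

Definition exp_lat (U : {set T}) (q : T -> R) (s : seq T) : R :=
  \sum_(A : {set T} | A \subset U)
     prob_active U q A * \sum_(v <- s | v \in A) latency [seq x <- s | x \in A] v.

Definition OPT (U : {set T}) (q : T -> R) : R :=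
  \big[Num.min/exp_lat U q (enum U)]_(s <- permutations (enum U)) exp_lat U q s.
End Generic.

Definition is_metric (V : finType) (d : V -> V -> R) : Prop :=
  [/\ forall x y, 0 <= d x y, forall x y, d x y = 0 <-> x = y,
      forall x y, d x y = d y x & forall x y z, d x z <= d x y + d y z].

Section Reduction.
Variables (V : finType) (pv : V -> R).

Definition nV : R := (#|V|)%:R.

Definition Xset : {set V} := [set v | 1 / (nV ^+ 2) <= pv v].

(* p = (1/n) min_{v in X} p_v  (the default 1 is irrelevant when X <> empty,
   since p_v <= 1) *)
Definition pJ : R := (1 / nV) * \big[Num.min/1]_(v in Xset) pv v.

Definition tcopies (v : V) : nat := absz (Num.ceil (pv v / pJ)).

Definition Kbound : nat := \max_(v : V) tcopies v.

(* copies: (v, i) stands for the i-th copy of v *)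
Definition Jtype : finType := (V * 'I_Kbound)%type.

Definition SJ : {set Jtype} :=
  [set x : Jtype | (x.1 \in Xset) && (x.2 < tcopies x.1)%N].

Definition consecutive (s : seq Jtype) : Prop :=
  forall (v : V) (s1 s2 s3 : seq Jtype), s = s1 ++ s2 ++ s3 ->
    v \in [seq x.1 | x <- s1] -> v \in [seq x.1 | x <- s3] ->
    all (fun x : Jtype => x.1 == v) s2.

Definition induced_tour (s : seq Jtype) : seq V := undup [seq x.1 | x <- s].

End Reduction.
End APrioriTRP.

(* Main.v *)
Require Import Defs.
From HB Require Import structures.
From mathcomp Require Import all_boot all_order all_algebra.
From mathcomp Require Import all_classical all_reals all_analysis.
From mathcomp Require Import ring lra.
From mathcomp Require Import fintype finset bigop.
Import Order.TTheory GRing.Theory Num.Theory.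
Import numFieldNormedType.Exports.
Set Implicit Arguments. Unset Strict Implicit. Unset Printing Implicit Defensive.
Local Open Scope ring_scope.
Import numFieldNormedType.Exports.

Section Core.
Variable R : realType.
Variable T : finType.
Implicit Types (U A B W D : {set T}) (q : T -> R) (g h : {set T} -> R).

Definition Ex U q (g : {set T} -> R) : R :=
  \sum_(A : {set T} | A \subset U) prob_active U q A * g A.

Lemma sum_subsetU1 U x (F : {set T} -> R) : x \notin U ->
  \sum_(A : {set T} | A \subset x |: U) F A =
  \sum_(B : {set T} | B \subset U) (F B + F (x |: B)).
Proof.
move=> xU; rewrite big_split /= (bigID (fun A => x \in A)) /= addrC.
congr (_ + _).
- apply: eq_bigl => A; apply/idP/idP.
  + case/andP=> sA xA; apply/fintype.subsetP => y yA.
    have := fintype.subsetP sA y yA; rewrite in_setU1; case/orP => // /eqP eyx.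
    by rewrite -eyx yA in xA.
  + move=> sA; rewrite (fintype.subset_trans sA (finset.subsetUr _ _)) /=.
    by apply/negP => /(fintype.subsetP sA); rewrite (negPf xU).
- rewrite (reindex_onto (fun B => x |: B) (fun A => A :\ x)) /=; last first.
    by move=> A /andP[_ xA]; rewrite finset.setD1K.
  apply: eq_bigl => B; rewrite setU11 andbT; apply/idP/idP.
  + case/andP=> sB /eqP eB.
    have xB : x \notin B by rewrite -eB !inE eqxx.
    apply/fintype.subsetP => y yB.
    have := fintype.subsetP sB y; rewrite !in_setU1 yB orbT => /(_ isT) /orP[|//].
    by move/eqP=> eyx; rewrite -eyx yB in xB.
  + move=> sB; rewrite finset.setUS //=.
    have xB : x \notin B by apply/negP => /(fintype.subsetP sB); rewrite (negPf xU).
    by rewrite setU1K.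
Qed.

Lemma prob_activeU1 U q x A : x \notin U ->
  prob_active (x |: U) q A = (if x \in A then q x else 1 - q x) * prob_active U q A.
Proof. by move=> xU; rewrite /prob_active big_setU1. Qed.

Lemma prob_active_addout U q x A : x \notin U ->
  prob_active U q (x |: A) = prob_active U q A.
Proof.
move=> xU; apply: eq_bigr => v vU; rewrite in_setU1.
have -> : (v == x) = false by apply/negP => /eqP evx; rewrite -evx vU in xU.
by [].
Qed.

Lemma Ex_split U q x g : x \notin U ->
  Ex (x |: U) q g = q x * Ex U q (fun A => g (x |: A)) + (1 - q x) * Ex U q g.
Proof.
move=> xU; rewrite /Ex sum_subsetU1 // big_split /= addrC !mulr_sumr.
congr (_ + _); apply: eq_bigr => B sB.
- rewrite prob_activeU1 // setU11 prob_active_addout //; ring.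
- have xB : x \notin B by apply/negP => /(fintype.subsetP sB); rewrite (negPf xU).
  rewrite prob_activeU1 // (negPf xB); ring.
Qed.

Lemma Ex_set0 q g : Ex set0 q g = g set0.
Proof.
rewrite /Ex (big_pred1 set0) ?/prob_active ?big_set0 ?mul1r // => A.
by rewrite subset0.
Qed.

Lemma set_ind (P : {set T} -> Prop) :
  P set0 -> (forall x U, x \notin U -> P U -> P (x |: U)) -> forall U, P U.
Proof.
move=> P0 PS U; move: {2}#|U| (erefl #|U|) => n; elim: n U => [|n IH] U cU.
  by move/eqP: cU; rewrite cards_eq0 => /eqP ->.
have : (0 < #|U|)%N by rewrite cU.
case/card_gt0P => x xU.
rewrite -(finset.setD1K xU); apply: PS; first by rewrite !inE eqxx.
by apply: IH; rewrite (cardsD1 x U) xU in cU; case: cU.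
Qed.

Lemma Ex_lin U q a (g h : {set T} -> R) :
  Ex U q (fun A => a * g A + h A) = a * Ex U q g + Ex U q h.
Proof.
rewrite /Ex mulr_sumr -big_split /=; apply: eq_bigr => A _; ring.
Qed.

Lemma Ex_const U q c : Ex U q (fun _ => c) = c.
Proof.
elim/set_ind: U => [|x U xU IH]; first by rewrite Ex_set0.
rewrite Ex_split // IH; ring.
Qed.

Lemma Ex_eq U q g h : (forall A, A \subset U -> g A = h A) -> Ex U q g = Ex U q h.
Proof. by move=> e; apply: eq_bigr => A sA; rewrite e. Qed.

Lemma Ex_eqq U q q' g : {in U, q =1 q'} -> Ex U q g = Ex U q' g.
Proof.
move=> e; apply: eq_bigr => A _; congr (_ * _); apply: eq_bigr => v vU.
by rewrite e.
Qed.

Lemma prob_active_ge0 U q A : {in U, forall v, 0 <= q v <= 1} -> 0 <= prob_active U q A.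
Proof.
move=> q01; apply: prodr_ge0 => v vU; case: ifP => _; have /andP[h1 h2] := q01 v vU.
  by [].
by rewrite subr_ge0.
Qed.

Lemma Ex_le U q g h : {in U, forall v, 0 <= q v <= 1} ->
  (forall A, A \subset U -> g A <= h A) -> Ex U q g <= Ex U q h.
Proof.
move=> q01 le; apply: ler_sum => A sA; apply: ler_wpM2l; last exact: le.
exact: prob_active_ge0.
Qed.


Lemma Ex_add U q g h : Ex U q (fun A => g A + h A) = Ex U q g + Ex U q h.
Proof. by rewrite /Ex -big_split /=; apply: eq_bigr => A _; rewrite mulrDr. Qed.

Lemma Ex_scale U q a g : Ex U q (fun A => a * g A) = a * Ex U q g.
Proof. by rewrite /Ex mulr_sumr; apply: eq_bigr => A _; rewrite mulrCA. Qed.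

Lemma Ex_scaler U q a g : Ex U q (fun A => g A * a) = Ex U q g * a.
Proof. by rewrite mulrC -Ex_scale; apply: Ex_eq => A _; rewrite mulrC. Qed.

Lemma Ex_opp U q g : Ex U q (fun A => - g A) = - Ex U q g.
Proof. by rewrite -mulN1r -Ex_scale; apply: Ex_eq => A _; rewrite mulN1r. Qed.

Lemma Ex_q0 U q g : {in U, forall v, q v = 0} -> Ex U q g = g set0.
Proof.
elim/set_ind: U g => [|x U xU IH] g q0; first by rewrite Ex_set0.
rewrite Ex_split // q0 ?setU11 // mul0r add0r subr0 mul1r IH //.
by move=> v vU; rewrite q0 // in_setU1 vU orbT.
Qed.

Lemma Ex_local W D q g : [disjoint W & D] ->
  (forall A, g A = g (A :&: W)) -> Ex (W :|: D) q g = Ex W q g.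
Proof.
move=> dWD gW; elim/set_ind: D dWD => [|x D xD IH] dWD.
  by rewrite setU0.
have xW : x \notin W.
  by apply/negP => xW; move/pred0P: dWD => /(_ x); rewrite /= xW in_setU1 eqxx.
have dWD' : [disjoint W & D].
  by apply: disjointWr dWD; apply: finset.subsetUr.
rewrite setUCA Ex_split; last by rewrite in_setU negb_or xW.
have -> : Ex (W :|: D) q (fun A => g (x |: A)) = Ex (W :|: D) q g.
  apply: Ex_eq => A _; rewrite (gW (x |: A)) (gW A); congr g.
  apply/finset.setP => y; rewrite !inE.
  by case: (eqVneq y x) => [->|_] //=; rewrite (negPf xW) !andbF.
rewrite IH //; ring.
Qed.

Lemma Ex_mono U q q' g : {in U, forall v, 0 <= q v <= 1} -> {in U, forall v, 0 <= q' v <= 1} ->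
  {in U, forall v, q v <= q' v} ->
  (forall A B, A \subset B -> g A <= g B) -> Ex U q g <= Ex U q' g.
Proof.
elim/set_ind: U g => [|x U xU IH] g q01 q'01 qq gm.
  by rewrite !Ex_set0.
have q01U : {in U, forall v, 0 <= q v <= 1}.
  by move=> v vU; apply: q01; rewrite in_setU1 vU orbT.
have q'01U : {in U, forall v, 0 <= q' v <= 1}.
  by move=> v vU; apply: q'01; rewrite in_setU1 vU orbT.
have qqU : {in U, forall v, q v <= q' v}.
  by move=> v vU; apply: qq; rewrite in_setU1 vU orbT.
rewrite !Ex_split //.
have h1 := IH (fun A => g (x |: A)) q01U q'01U qqU (fun A B s => gm _ _ (finset.setUS _ s)).
have h2 := IH g q01U q'01U qqU gm.
have h3 : Ex U q' g <= Ex U q' (fun A => g (x |: A)).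
  by apply: Ex_le => // A _; apply: gm; apply: finset.subsetUr.
have hx := qq x (setU11 _ _).
have /andP[q0 q1] := q01 x (setU11 _ _); have /andP[q'0 q'1] := q'01 x (setU11 _ _).
apply: (le_trans (y := q x * Ex U q' (fun A => g (x |: A)) + (1 - q x) * Ex U q' g)).
  apply: lerD; apply: ler_wpM2l => //; by rewrite subr_ge0.
rewrite -subr_ge0.
have -> : q' x * Ex U q' (fun A => g (x |: A)) + (1 - q' x) * Ex U q' g -
  (q x * Ex U q' (fun A => g (x |: A)) + (1 - q x) * Ex U q' g) =
  (q' x - q x) * (Ex U q' (fun A => g (x |: A)) - Ex U q' g) by ring.
by apply: mulr_ge0; rewrite subr_ge0.
Qed.

Lemma Ex_thin U q b g :
  Ex U q (fun A => Ex A b g) = Ex U (fun v => q v * b v) g.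
Proof.
elim/set_ind: U g => [|x U xU IH] g.
  by rewrite !Ex_set0.
rewrite !Ex_split //.
have -> : Ex U q (fun A => Ex (x |: A) b g) =
    Ex U q (fun A => b x * Ex A b (fun B => g (x |: B)) + (1 - b x) * Ex A b g).
  apply: Ex_eq => A sA; rewrite Ex_split //.
  by apply/negP => /(fintype.subsetP sA); rewrite (negPf xU).
rewrite Ex_add !Ex_scale !IH; ring.
Qed.

Lemma Ex_ind U q y :
  Ex U q (fun A => (y \in A)%:R) = if y \in U then q y else 0.
Proof.
elim/set_ind: U => [|x U xU IH]; first by rewrite Ex_set0 !inE.
rewrite Ex_split // in_setU1.
case: (eqVneq y x) => [->|nyx] /=.
  have -> : Ex U q (fun A => (x \in x |: A)%:R) = 1.
    by rewrite -[RHS](Ex_const U q); apply: Ex_eq => A _; rewrite setU11.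
  have -> : Ex U q (fun A => (x \in A)%:R) = Ex U q (fun _ => 0).
    apply: Ex_eq => A sA; apply/eqP; rewrite pnatr_eq0 eqb0.
    by apply/negP => /(fintype.subsetP sA); rewrite (negPf xU).
  by rewrite Ex_const; ring.
have -> : Ex U q (fun A => (y \in x |: A)%:R) = Ex U q (fun A => (y \in A)%:R).
  by apply: Ex_eq => A _; rewrite in_setU1 (negPf nyx).
by rewrite IH; ring.
Qed.

End Core.

Section Lat.
Variables (R : realType) (T : finType) (dr : T -> R) (d : T -> T -> R).

Definition dist (zo : option T) (y : T) : R := if zo is Some z then d z y else dr y.

Fixpoint latrO (zo : option T) (s : seq T) (v : T) : R :=
  if s is y :: s' then dist zo y + (if y == v then 0 else latrO (Some y) s' v) else 0.

Lemma path_take s z v : path_len d z (take (index v s).+1 s) = latrO (Some z) s v.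
Proof.
elim: s z => [|y s IH] z //.
rewrite /index /=; case: ifP => _ /=.
  by rewrite take0 /=.
by rewrite -/(index v s) IH.
Qed.

Lemma latencyE s v : latency dr d s v = latrO None s v.
Proof.
case: s => [|y s] //; rewrite /latency /index /=; case: ifP => _ /=.
  by rewrite take0.
by rewrite -/(index v s) path_take.
Qed.

Section Pos.
Hypotheses (hdr : forall y, 0 <= dr y) (hd : forall x y, 0 <= d x y).

Lemma dist_ge0 zo y : 0 <= dist zo y.
Proof. by case: zo => [z|] /=; [exact: hd|exact: hdr]. Qed.

Lemma latrO_ge0 zo s v : 0 <= latrO zo s v.
Proof.
elim: s zo => [|y s IH] zo //=; apply: addr_ge0; first exact: dist_ge0.
by case: ifP.
Qed.

Hypotheses (tr1 : forall y w, dr w <= dr y + d y w)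
           (tr2 : forall z y w, d z w <= d z y + d y w).

Lemma dist_tri zo y w : dist zo w <= dist zo y + d y w.
Proof. by case: zo => [z|] /=. Qed.

Lemma latrO_tri zo y s v : latrO zo s v <= dist zo y + latrO (Some y) s v.
Proof.
case: s => [|w s] /=; first by rewrite addr0 dist_ge0.
have := dist_tri zo y w; set X := (if w == v then _ else _) => h.
by rewrite addrA lerD2r.
Qed.

Lemma latrO_mono (P P' : pred T) v : (forall y, P y -> P' y) -> P v ->
  forall s zo, latrO zo (seq.filter P s) v <= latrO zo (seq.filter P' s) v.
Proof.
move=> PP Pv; elim=> [|y s IH] zo //=.
case Py: (P y); first rewrite (PP y Py) /=.
  by case: ifP => _ //; rewrite lerD2l.
case P'y: (P' y) => //=.
have -> : (y == v) = false by apply/negP => /eqP eyv; rewrite eyv Pv in Py.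
exact: le_trans (IH zo) (latrO_tri _ _ _ _).
Qed.

Lemma latrO_ge_dist zo s v : v \in s -> dist zo v <= latrO zo s v.
Proof.
elim: s zo => [|y s IH] zo //=; rewrite in_cons.
case: (eqVneq y v) => [->|nyv] /=; first by rewrite addr0.
move=> vs; apply: le_trans (dist_tri zo y v) _; rewrite lerD2l; exact: (IH (Some y) vs).
Qed.

Fixpoint lowl (ind : T -> R) (c : R) zo s v : R :=
  if s is y :: s' then (c + ind y - 1) * dist zo y +
     (if y == v then 0 else lowl ind (ind y) (Some y) s' v) else 0.

Lemma low_le (P : pred T) v : forall s (b : bool) zo zo', (b -> zo = zo') ->
  lowl (fun y => (P y)%:R) b%:R zo s v <= latrO zo' (seq.filter P s) v.
Proof.
elim=> [|y s IH] b zo zo' hb //=.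
case Py: (P y) => /=.
  apply: lerD.
    case: b hb => [/(_ isT) ->|_] /=.
      by rewrite addrK mul1r.
    by rewrite add0r subrr mul0r dist_ge0.
  by case: ifP => _ //; exact: (IH true).
apply: (@le_trans _ _ (0 + latrO zo' [seq x <- s | P x] v)); last by rewrite add0r.
apply: lerD.
  rewrite addr0 mulr_le0_ge0 ?dist_ge0 //.
  by case: b {hb} => /=; rewrite ?subrr ?sub0r ?oppr_le0.
case: ifP => _; first exact: latrO_ge0.
exact: (IH false).
Qed.

Lemma Ex_lowl (U : {set T}) q (ind : {set T} -> T -> R) a v :
  forall s C zo, (forall y, y \in s -> a <= Ex U q (fun B => ind B y)) ->
  a <= Ex U q C ->
  (2 * a - 1) * latrO zo s v <= Ex U q (fun B => lowl (ind B) (C B) zo s v).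
Proof.
elim=> [|y s IH] C zo hind hC /=.
  by rewrite mulr0 (Ex_const U q 0).
rewrite Ex_add Ex_scaler.
have -> : Ex U q (fun A => C A + ind A y - 1) = Ex U q C + Ex U q (fun A => ind A y) - 1.
  by rewrite Ex_add Ex_add Ex_const.
rewrite mulrDr; apply: lerD.
  apply: ler_wpM2r; first exact: dist_ge0.
  have := hind y (mem_head _ _); lra.
case: ifP => _.
  by rewrite mulr0 (Ex_const U q 0).
apply: IH; first by move=> w ws; apply: hind; rewrite in_cons ws orbT.
by apply: hind; exact: mem_head.
Qed.

End Pos.

Lemma latrO_zero (s : seq T) v :
  (forall y, y \in s -> dr y = 0) ->
  (forall z y, dr z = 0 -> dr y = 0 -> d z y = 0) ->
  forall zo, (if zo is Some z then dr z = 0 else True) -> latrO zo s v = 0.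
Proof.
move=> hs hd0; elim: s hs => [|y s IH] hs zo hzo //=.
have dy : dr y = 0 by apply: hs; exact: mem_head.
have -> : dist zo y = 0 by case: zo hzo => [z hz|_] /=; [exact: hd0|].
rewrite add0r; case: ifP => _ //; apply: IH => // w ws.
by apply: hs; rewrite in_cons ws orbT.
Qed.

End Lat.

Section Blk.
Variables (R : realType) (J V : finType) (f : J -> V) (drV : V -> R) (dV : V -> V -> R).
Hypothesis dV0 : forall u, dV u u = 0.
Let drJ := fun y => drV (f y).
Let dJ := fun y y' => dV (f y) (f y').

Lemma distJ zo y : dist drJ dJ zo y = dist drV dV (omap f zo) (f y).
Proof. by case: zo. Qed.

Lemma latrJ_f w w' l x : f w = f w' ->
  latrO drJ dJ (Some w) l x = latrO drJ dJ (Some w') l x.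
Proof. by case: l => [|y l] //= e; rewrite /dJ e. Qed.

Lemma latrJ_zero x rest : forall c w, (forall y, y \in c -> f y = f w) -> x \in c ->
  latrO drJ dJ (Some w) (c ++ rest) x = 0.
Proof.
elim=> [|y c IH] w hc //= xc.
have fy : f y = f w by apply: hc; exact: mem_head.
rewrite /dJ fy dV0 add0r; case: (eqVneq y x) => [//|nyx].
apply: IH.
  by move=> z zc; rewrite fy; apply: hc; rewrite in_cons zc orbT.
by move: xc; rewrite in_cons eq_sym (negPf nyx).
Qed.

Lemma latrJ_skip x rest : forall c w, (forall y, y \in c -> f y = f w) -> x \notin c ->
  latrO drJ dJ (Some w) (c ++ rest) x = latrO drJ dJ (Some w) rest x.
Proof.
elim=> [|y c IH] w hc //= xc.
have fy : f y = f w by apply: hc; exact: mem_head.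
rewrite /dJ fy dV0 add0r.
have nyx : (y == x) = false.
  by apply/negP => /eqP e; move: xc; rewrite e mem_head.
rewrite nyx IH.
- by apply: latrJ_f.
- by move=> z zc; rewrite fy; apply: hc; rewrite in_cons zc orbT.
- by move: xc; rewrite in_cons negb_or => /andP[].
Qed.

Lemma latr_blocks (bb : V -> seq J) x :
  (forall u y, y \in bb u -> f y = u) -> x \in bb (f x) ->
  forall (pi : seq V) zo,
  latrO drJ dJ zo (flatten (map bb pi)) x =
  latrO drV dV (omap f zo) [seq u <- pi | bb u != [::]] (f x).
Proof.
move=> H1 H2; elim=> [|u pi IH] zo //=.
case E: (bb u) => [|y c] /=; first exact: IH.
have fy : f y = u by apply: (H1 u); rewrite E mem_head.
rewrite distJ fy.
case: (eqVneq u (f x)) => [eu|nu].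
  have xc : x \in y :: c by rewrite -E eu.
  case: (eqVneq y x) => [//|nyx].
  congr (_ + _); apply: latrJ_zero.
    by move=> z zc; rewrite fy; apply: (H1 u); rewrite E in_cons zc orbT.
  by move: xc; rewrite in_cons eq_sym (negPf nyx).
have xc : x \notin y :: c.
  by apply/negP; rewrite -E => /H1 e; rewrite e eqxx in nu.
have -> : (y == x) = false by apply/negP => /eqP e; rewrite e mem_head in xc.
rewrite latrJ_skip.
- by rewrite IH /= fy.
- by move=> z zc; rewrite fy; apply: (H1 u); rewrite E in_cons zc orbT.
- by move: xc; rewrite in_cons negb_or => /andP[].
Qed.

End Blk.

Section PF.
Variables (R : realType) (J V : finType) (f : J -> V).

Lemma Ex_group (W : {set V}) (q : V -> R) u p (h : {set V} -> R) : u \in W ->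
  p * Ex W q (fun B => h (u |: B)) + (1 - p) * Ex W q h =
  Ex W (fun w => if w == u then 1 - (1 - p) * (1 - q u) else q w) h.
Proof.
move=> uW; have uW0 : u \notin W :\ u by rewrite !inE eqxx.
rewrite -(finset.setD1K uW) !Ex_split // eqxx.
have -> : Ex (W :\ u) q (fun A => h (u |: (u |: A))) = Ex (W :\ u) q (fun A => h (u |: A)).
  by apply: Ex_eq => A _; rewrite setUA setUid.
have E : forall g, Ex (W :\ u) (fun w => if w == u then 1 - (1 - p) * (1 - q u) else q w) g
   = Ex (W :\ u) q g.
  move=> g; apply: Ex_eqq => w; rewrite !inE => /andP[nwu _].
  by rewrite (negPf nwu).
rewrite !E; ring.
Qed.

Lemma card_sel (U : {set J}) x w : x \notin U ->
  #|[set y in x |: U | f y == w]| = ((f x == w) + #|[set y in U | f y == w]|)%N.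
Proof.
move=> xU; case: (eqVneq (f x) w) => [e|ne].
  have -> : [set y in x |: U | f y == w] = x |: [set y in U | f y == w].
    by apply/finset.setP => y; rewrite !inE; case: (eqVneq y x) => [->|] //=; rewrite e eqxx.
  by rewrite cardsU1 !inE (negPf xU).
have -> : [set y in x |: U | f y == w] = [set y in U | f y == w].
  apply/finset.setP => y; rewrite !inE; case: (eqVneq y x) => [->|] //=.
  by rewrite (negPf ne) (negPf xU).
by [].
Qed.

Lemma Ex_push (U : {set J}) (W : {set V}) p (h : {set V} -> R) :
  Ex U (fun _ => p) (fun A => h (f @: A :&: W)) =
  Ex W (fun u => 1 - (1 - p) ^+ #|[set y in U | f y == u]|) h.
Proof.
elim/set_ind: U h => [|x U xU IH] h.
  rewrite Ex_set0 imset0 set0I Ex_q0 // => u _.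
  have -> : [set y in set0 | f y == u] = set0 :> {set J}.
    by apply/finset.setP => y; rewrite !inE.
  by rewrite cards0 expr0 subrr.
rewrite Ex_split //.
have eqq : forall g, Ex W (fun u => 1 - (1 - p) ^+ #|[set y in x |: U | f y == u]|) g =
   Ex W (fun w => if w == f x then 1 - (1 - p) * (1 - (1 - (1 - p) ^+ #|[set y in U | f y == f x]|))
                  else 1 - (1 - p) ^+ #|[set y in U | f y == w]|) g.
  move=> g; apply: Ex_eqq => w _; rewrite card_sel //.
  case: (eqVneq w (f x)) => [->|nw] /=; first by rewrite exprS; congr (_ - _); ring.
  by [].
case: (boolP (f x \in W)) => fxW.
  have -> : Ex U (fun _ => p) (fun A => h (f @: (x |: A) :&: W)) =
            Ex U (fun _ => p) (fun A => (fun B => h (f x |: B)) (f @: A :&: W)).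
    apply: Ex_eq => A _; rewrite imsetU1; congr h.
    apply/finset.setP => y; rewrite !inE; case: (eqVneq y (f x)) => [->|] //=.
  by rewrite (IH (fun B => h (f x |: B))) IH Ex_group // eqq.
have -> : Ex U (fun _ => p) (fun A => h (f @: (x |: A) :&: W)) =
          Ex U (fun _ => p) (fun A => h (f @: A :&: W)).
  apply: Ex_eq => A _; rewrite imsetU1; congr h.
  apply/finset.setP => y; rewrite !inE; case: (eqVneq y (f x)) => [->|] //=.
  by rewrite (negPf fxW) !andbF.
rewrite IH.
have -> : Ex W (fun u => 1 - (1 - p) ^+ #|[set y in x |: U | f y == u]|) h =
   Ex W (fun u => 1 - (1 - p) ^+ #|[set y in U | f y == u]|) h.
  apply: Ex_eqq => w wW; rewrite card_sel //.
  have -> : (f x == w) = false by apply/negP => /eqP e; rewrite e wW in fxW.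
  by [].
ring.
Qed.

End PF.

Section Dec.
Variables (R : realType) (T : finType) (dr : T -> R) (d : T -> T -> R).
Implicit Types (U A B W : {set T}) (q b : T -> R) (s : seq T).

Lemma Ex_cond U q v (g : {set T} -> R) : v \in U ->
  Ex U q (fun A => if v \in A then g A else 0) = q v * Ex (U :\ v) q (fun A => g (v |: A)).
Proof.
move=> vU; have vU0 : v \notin U :\ v by rewrite !inE eqxx.
have := @Ex_split R T (U :\ v) q v (fun A => if v \in A then g A else 0) vU0.
rewrite finset.setD1K // => ->.
have -> : Ex (U :\ v) q (fun A => if v \in v |: A then g (v |: A) else 0) =
          Ex (U :\ v) q (fun A => g (v |: A)).
  by apply: Ex_eq => A _; rewrite setU11.
have -> : Ex (U :\ v) q (fun A => if v \in A then g A else 0) = Ex (U :\ v) q (fun _ => 0).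
  apply: Ex_eq => A sA.
  have : v \notin A by apply/negP => /(fintype.subsetP sA); rewrite (negPf vU0).
  by move/negPf ->.
rewrite Ex_const; ring.
Qed.

Lemma exp_latE U q s : (forall v, v \in s -> v \in U) ->
  exp_lat dr d U q s = \sum_(v <- s) q v *
     Ex (U :\ v) q (fun A => latency dr d [seq w <- s | w \in v |: A] v).
Proof.
move=> sU; rewrite /exp_lat.
have -> : \sum_(A : {set T} | A \subset U) prob_active U q A *
     \sum_(v <- s | v \in A) latency dr d [seq x <- s | x \in A] v =
  \sum_(A : {set T} | A \subset U) \sum_(v <- s) prob_active U q A *
     (if v \in A then latency dr d [seq x <- s | x \in A] v else 0).
  apply: eq_bigr => A _; rewrite big_mkcond mulr_sumr; apply: eq_bigr => v _.
  by case: ifP => _; rewrite ?mulr0.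
rewrite exchange_big /= big_seq [RHS]big_seq; apply: eq_bigr => v vs.
by rewrite -(@Ex_cond U q v (fun A => latency dr d [seq x <- s | x \in A] v)) ?sU.
Qed.

Section Pos.
Hypotheses (hdr : forall y, 0 <= dr y) (hd : forall x y, 0 <= d x y).

Lemma thin_pt (pi : seq T) v (A : {set T}) (b : T -> R) a :
  (forall y, y \in A -> a <= b y) -> a <= 1 -> {in A, forall y, 0 <= b y <= 1} ->
  (2 * a - 1) * latency dr d [seq w <- pi | w \in v |: A] v <=
  Ex A b (fun B => latency dr d [seq w <- pi | w \in v |: B] v).
Proof.
move=> hb a1 hb01; set t := [seq w <- pi | w \in v |: A].
have eB : forall B, B \subset A ->
    [seq w <- pi | w \in v |: B] = [seq w <- t | w \in v |: B].
  move=> B sB; rewrite /t -filter_predI; apply: eq_filter => w /=.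
  case wB: (w \in v |: B) => //=; symmetry.
  exact: (fintype.subsetP (finset.setUS [set v] sB) w wB).
rewrite latencyE.
apply: (le_trans (@Ex_lowl R T dr d hdr hd A b (fun B y => (y \in v |: B)%:R) a v t
          (fun _ => true%:R) None _ _)).
- move=> y; rewrite /t mem_filter => /andP[yA _].
  move: yA; rewrite in_setU1; case: (eqVneq y v) => [->|nyv] /= yA.
    rewrite (_ : Ex A b (fun B => (v \in v |: B)%:R) = Ex A b (fun _ => 1)).
      by rewrite Ex_const.
    by apply: Ex_eq => B _; rewrite setU11.
  rewrite (_ : Ex A b (fun B => (y \in v |: B)%:R) = Ex A b (fun B => (y \in B)%:R)).
    by rewrite Ex_ind yA; apply: hb.
  by apply: Ex_eq => B _; rewrite in_setU1 (negPf nyv).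
- by rewrite Ex_const.
- apply: Ex_le => // B sB.
  rewrite eB // latencyE.
  exact: (@low_le R T dr d hdr hd (fun w => w \in v |: B) v t true None None).
Qed.

Lemma thin_Ex W q b a (pi : seq T) v :
  (forall y, y \in W -> a <= b y) -> a <= 1 -> {in W, forall y, 0 <= b y <= 1} ->
  {in W, forall y, 0 <= q y <= 1} ->
  (2 * a - 1) * Ex W q (fun B => latency dr d [seq w <- pi | w \in v |: B] v) <=
  Ex W (fun y => q y * b y) (fun B => latency dr d [seq w <- pi | w \in v |: B] v).
Proof.
move=> hb a1 hb01 hq01; rewrite -Ex_thin -Ex_scale; apply: Ex_le => // A sA.
apply: thin_pt => //.
  by move=> y yA; apply: hb; exact: (fintype.subsetP sA).
by move=> y yA; apply: hb01; exact: (fintype.subsetP sA).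
Qed.

Hypotheses (tr1 : forall y w, dr w <= dr y + d y w)
           (tr2 : forall z y w, d z w <= d z y + d y w).

Lemma lat_mono (pi : seq T) v B B' : B \subset B' ->
  latency dr d [seq w <- pi | w \in v |: B] v <= latency dr d [seq w <- pi | w \in v |: B'] v.
Proof.
move=> sB; rewrite !latencyE; apply: latrO_mono => //; last by rewrite setU11.
by move=> y; apply: (fintype.subsetP (finset.setUS [set v] sB)).
Qed.

Lemma lat_ge (pi : seq T) v B : v \in pi ->
  dr v <= latency dr d [seq w <- pi | w \in v |: B] v.
Proof.
move=> vpi; rewrite latencyE.
apply: (@latrO_ge_dist R T dr d tr1 tr2 None)...
by rewrite mem_filter setU11.
Qed.

End Pos.
End Dec.

Section NumS.
Variable R : realType.
Local Open Scope classical_set_scope.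
Local Open Scope ring_scope.

Lemma flim : (fun n : nat => 16 * (n.+1%:R)^-1 : R) @ \oo --> 0.
Proof.
rewrite -(mulr0 (16 : R)); apply: cvgMl_tmp.
exact: (@cvg_harmonic R).
Qed.

Lemma chord (x : R) : 0 <= x <= 1 -> expR (- x) <= x * expR (-1) + (1 - x).
Proof.
move=> /andP[x0 x1].
have P : Itv.spec (@Itv.num_sem R) (Itv.Real `[0%Z, 1%Z]) x.
  rewrite /Itv.spec /Itv.num_sem /= in_itv /= x1 andbT.
  by rewrite ger0_real.
pose t : {i01 R} := @Itv.mk _ _ (Itv.Real `[0%Z, 1%Z]) x P.
have := convex_expR t (-1) 0.
rewrite !convRE /= expR0 mulr1 mulr0 addr0 mulrN1.
by rewrite [_ * expR (-1)]mulrC.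
Qed.

Lemma E_ge : (625 / 256 : R) <= expR 1.
Proof.
have e : (1 : R) = 4%:R * (1 / 4) by field.
rewrite e expRM_natl.
have h : (5 / 4 : R) <= expR (1 / 4).
  by apply: le_trans (expR_ge1Dx _); rewrite -subr_ge0; lra.
have h0 : (0 : R) <= 5 / 4 by lra.
have := @lerXn2r R 4 (5/4) (expR (1/4)).
rewrite !nnegrE expR_ge0 h0 => /(_ isT isT h).
by apply: le_trans; rewrite -subr_ge0; lra.
Qed.

Lemma expRN1 : expR (-1) = (expR 1)^-1 :> R.
Proof. by rewrite expRN. Qed.

Lemma constK : (1 - 2 * expR (-1))^-1 <= (expR 1 / (expR 1 - 1)) ^+ 4 :> R.
Proof.
rewrite expRN1; set E := expR 1.
have hE := E_ge; rewrite -/E in hE.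
have E1 : 0 < E - 1 by lra.
have E2 : 0 < E - 2 by lra.
have -> : 1 - 2 * E^-1 = (E - 2) / E by field; lra.
rewrite invf_div expr_div_n.
rewrite ler_pdivlMr; last by apply: exprn_gt0.
rewrite mulrAC ler_pdivrMr; last lra.
have : 1 <= 2 * E * (E - 1) * (E - 2).
  have h1 : 2 * (625/256) * (625/256 - 1) * (625/256 - 2) <= 2 * E * (E - 1) * (E - 2).
    apply: ler_pM; [lra|lra| |lra].
    apply: ler_pM; [lra|lra| |lra].
    apply: ler_pM; lra.
  apply: le_trans h1; lra.
move=> h; rewrite -subr_ge0.
have -> : E ^+ 4 * (E - 2) - E * (E - 1) ^+ 4 = E * (2 * E * (E - 1) * (E - 2) - 1) by ring.
apply: mulr_ge0; lra.
Qed.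

Lemma bern (p : R) (t : nat) : 0 <= p <= 1 -> 1 - (1 - p) ^+ t <= t%:R * p.
Proof.
move=> /andP[p0 p1]; elim: t => [|t IH]; first by rewrite expr0 subrr mul0r.
rewrite exprS -natr1 mulrDl mul1r.
have h : 0 <= (1 - p) ^+ t by apply: exprn_ge0; lra.
have h1 : (1 - p) ^+ t <= 1 by apply: exprn_ile1; lra.
nra.
Qed.

Lemma qlow (p x : R) (t : nat) : 0 <= p <= 1 -> 0 <= x <= 1 -> x <= t%:R * p ->
  (1 - expR (-1)) * x <= 1 - (1 - p) ^+ t.
Proof.
move=> /andP[p0 p1] /andP[x0 x1] xt.
have h1 : (1 - p) ^+ t <= expR (- p) ^+ t.
  apply: lerXn2r; rewrite ?nnegrE ?expR_ge0 //; first lra.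
  by have := expR_ge1Dx (- p); lra.
have h2 : expR (- p) ^+ t <= expR (- x).
  by rewrite -expRM_natl ler_expR mulrN lerN2.
have h3 := chord (x:=x); rewrite x0 x1 in h3; have := h3 isT.
lra.
Qed.

End NumS.

Section Opt.
Variables (R : realType) (T : finType) (dr : T -> R) (d : T -> T -> R).
Implicit Types (U : {set T}) (q : T -> R) (s : seq T).

Lemma big_min_le (l : seq (seq T)) (x0 : R) (F : seq T -> R) s :
  s \in l -> \big[Num.min/x0]_(i <- l) F i <= F s.
Proof.
elim: l => [//|a l IH]; rewrite in_cons big_cons => /orP[/eqP ->|sl].
  by rewrite ge_min lexx.
by rewrite ge_min (IH sl) orbT.
Qed.

Lemma big_min_mem (l : seq (seq T)) (x0 : R) (F : seq T -> R) :
  \big[Num.min/x0]_(i <- l) F i = x0 \/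
  exists2 i, i \in l & \big[Num.min/x0]_(i <- l) F i = F i.
Proof.
elim: l => [|a l IH]; first by left; rewrite big_nil.
rewrite big_cons minEle; case: ifP => _.
  by right; exists a => //; rewrite mem_head.
case: IH => [->|[i il ->]]; first by left.
by right; exists i => //; rewrite in_cons il orbT.
Qed.

Lemma OPT_le U q s : perm_eq s (enum U) -> OPT dr d U q <= exp_lat dr d U q s.
Proof. by move=> ps; rewrite /OPT; apply: big_min_le; rewrite mem_permutations. Qed.

Lemma OPT_att U q : exists2 s, perm_eq s (enum U) & OPT dr d U q = exp_lat dr d U q s.
Proof.
rewrite /OPT; case: (big_min_mem (permutations (enum U)) (exp_lat dr d U q (enum U)) (exp_lat dr d U q)) => [->|[s sl ->]].
  by exists (enum U).
by exists s => //; rewrite -mem_permutations.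
Qed.

Hypotheses (hdr : forall y, 0 <= dr y) (hd : forall x y, 0 <= d x y).

Lemma exp_lat_ge0 U q s : {in U, forall v, 0 <= q v <= 1} -> 0 <= exp_lat dr d U q s.
Proof.
move=> q01; apply: sumr_ge0 => A _; apply: mulr_ge0; first exact: prob_active_ge0.
apply: sumr_ge0 => v _; rewrite latencyE; exact: latrO_ge0.
Qed.

Lemma OPT_ge0 U q : {in U, forall v, 0 <= q v <= 1} -> 0 <= OPT dr d U q.
Proof.
move=> q01; have [s _ ->] := OPT_att U q; exact: exp_lat_ge0.
Qed.

Lemma exp_lat_zero U q s : (forall y, y \in s -> dr y = 0) ->
  (forall z y, dr z = 0 -> dr y = 0 -> d z y = 0) -> exp_lat dr d U q s = 0.
Proof.
move=> hs hd0; apply: big1 => A _; rewrite big1 ?mulr0 // => v _.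
rewrite latencyE; apply: latrO_zero => // y.
by rewrite mem_filter => /andP[_ /hs].
Qed.

End Opt.

Section Main.
Variable R : realType.
Variables (V : finType) (d : V -> V -> R) (r : V) (pv : V -> R).
Hypothesis md : is_metric d.

Local Notation J := (Jtype pv).
Local Notation X := (Xset pv).
Local Notation SJ := (SJ pv).
Local Notation t := (tcopies pv).
Local Notation K := (Kbound pv).

Lemma d0 u : d u u = 0.
Proof. by case: md => _ h _ _; apply/h. Qed.
Lemma dge0 u w : 0 <= d u w.
Proof. by case: md. Qed.
Lemma dsym u w : d u w = d w u.
Proof. by case: md. Qed.
Lemma dtri u w z : d u z <= d u w + d w z.
Proof. by case: md. Qed.

Definition blk (s : seq J) (u : V) := [seq y <- s | y.1 == u].
Definition Lv (pi : seq V) (u : V) (B : {set V}) :=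
  latency (d r) d [seq w <- pi | w \in u |: B] u.

Lemma J3 (s : seq J) (b : V -> seq J) (pi : seq V) (x : J) (A : {set J}) :
  s = flatten (map b pi) -> (forall u y, y \in b u -> y.1 = u) ->
  (forall y, y \in SJ -> y \in b y.1) -> (forall u, u \in pi -> u \in X) ->
  x \in SJ -> A \subset SJ :\ x ->
  latency (fun y => d r y.1) (fun y z => d y.1 z.1) [seq w <- s | w \in x |: A] x =
  Lv pi x.1 ([set y.1 | y in A] :&: (X :\ x.1)).
Proof.
move=> es H1 H2 Hpi xS sA.
rewrite /Lv es filter_flatten !latencyE.
have -> : [seq [seq w <- i | w \in x |: A] | i <- map b pi] =
          map (fun u => [seq w <- b u | w \in x |: A]) pi by rewrite -map_comp.
rewrite (@latr_blocks R J V fst (d r) d d0 (fun u => [seq w <- b u | w \in x |: A]) x).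
- congr latrO; apply: eq_in_filter => u upi; rewrite -has_filter.
  apply/hasP/idP.
  + case=> y yb yP; have fy := H1 _ _ yb.
    move: yP; rewrite !in_setU1; case: (eqVneq y x) => [eyx|nyx] /=.
      by rewrite -fy eyx eqxx.
    move=> yA; case: (eqVneq u x.1) => //= nu.
    by rewrite in_setI in_setD1 nu Hpi // andbT -fy imset_f.
  + rewrite !in_setU1; case/orP => [/eqP ->|].
      by exists x; [apply: H2|rewrite setU11].
    rewrite !inE => /andP[/imsetP[y yA ->] _].
    exists y; last by rewrite in_setU1 yA orbT.
    apply: H2; have := fintype.subsetP sA y yA; rewrite !inE => /andP[].
    by [].
- by move=> u y; rewrite mem_filter => /andP[_ /H1].
- by rewrite mem_filter setU11 H2.
Qed.


Lemma t_le_K u : (t u <= K)%N.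
Proof. by rewrite /Kbound; apply: (@leq_bigmax V (tcopies pv) u). Qed.

Lemma memSJ (y : J) : (y \in SJ) = (y.1 \in X) && (y.2 < t y.1)%N.
Proof. by rewrite /Defs.SJ inE. Qed.

Lemma sum_SJ (G : V -> R) : \sum_(y in SJ) G y.1 = \sum_(u in X) (t u)%:R * G u.
Proof.
have -> : \sum_(y in SJ) G y.1 =
    \sum_(y : V * 'I_K | (y.1 \in X) && (y.2 < t y.1)%N) G y.1.
  by apply: eq_bigl => y; rewrite memSJ.
rewrite -(pair_big_dep (fun u => u \in X) (fun u (i : 'I_K) => (i < t u)%N) (fun u _ => G u)).
apply: eq_bigr => u uX.
rewrite (big_ord_narrow (F := fun _ => G u) (t_le_K u)) /= sumr_const card_ord.
by rewrite mulr_natl.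
Qed.

Lemma card_grp (x : J) u : u \in X -> u != x.1 ->
  #|[set y in SJ :\ x | y.1 == u]| = t u.
Proof.
move=> uX nu; rewrite -sum1_card.
have -> : (\sum_(y in [set y in SJ :\ x | y.1 == u]) 1 =
    \sum_(y : V * 'I_K | (y.1 == u) && (y.2 < t y.1)%N) 1)%N.
  apply: eq_bigl => y; rewrite in_set in_setD1 memSJ.
  case: (eqVneq y.1 u) => [e|] /=; last by rewrite andbF.
  rewrite e uX /= andbT; case: (eqVneq y x) => [ex|//].
  by rewrite -e ex eqxx in nu.
rewrite -(pair_big_dep (fun w => w == u) (fun w (i : 'I_K) => (i < t w)%N) (fun _ _ => 1%N)).
rewrite big_pred1_eq (big_ord_narrow (F := fun _ => 1%N) (t_le_K u)) /=.
by rewrite sum1_card card_ord.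
Qed.

Definition qJ u := 1 - (1 - pJ pv) ^+ t u.

Lemma J_dec (s : seq J) (b : V -> seq J) (pi : seq V) :
  s = flatten (map b pi) -> (forall u y, y \in b u -> y.1 = u) ->
  (forall y, y \in SJ -> y \in b y.1) -> (forall u, u \in pi -> u \in X) ->
  perm_eq s (enum SJ) ->
  exp_lat (fun y => d r y.1) (fun y z => d y.1 z.1) SJ (fun _ => pJ pv) s =
  \sum_(u in X) (t u)%:R * (pJ pv * Ex (X :\ u) qJ (Lv pi u)).
Proof.
move=> es H1 H2 Hpi ps.
rewrite exp_latE; last by move=> y; rewrite (perm_mem ps) mem_enum.
rewrite (perm_big _ ps) big_enum /= -sum_SJ.
apply: eq_bigr => x xS; congr (_ * _).
transitivity (Ex (SJ :\ x) (fun _ => pJ pv)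
   (fun A => Lv pi x.1 ([set y.1 | y in A] :&: (X :\ x.1)))).
  apply: Ex_eq => A sA.
  exact: (J3 es H1 H2 Hpi xS sA).
apply: eq_trans (@Ex_push R J V fst (SJ :\ x) (X :\ x.1) (pJ pv) (Lv pi x.1)) _.
apply: Ex_eqq => u; rewrite in_setD1 => /andP[nu uX].
by rewrite card_grp.
Qed.


Lemma Lv_local (pi : seq V) u A : (forall w, w \in pi -> w \in X) ->
  Lv pi u A = Lv pi u (A :&: (X :\ u)).
Proof.
move=> Hpi; rewrite /Lv; congr latency; apply: eq_in_filter => w wpi.
rewrite !in_setU1 in_setI in_setD1 Hpi // andbT.
by case: (eqVneq w u) => //= _; rewrite andbT.
Qed.

Lemma V_decT (pi : seq V) : perm_eq pi (enum X) ->
  exp_lat (d r) d [set: V] pv pi = \sum_(u in X) pv u * Ex (X :\ u) pv (Lv pi u).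
Proof.
move=> ps; have Hpi : forall w, w \in pi -> w \in X by move=> w; rewrite (perm_mem ps) mem_enum.
rewrite exp_latE; last by move=> w; rewrite in_setT.
rewrite (perm_big _ ps) big_enum /=.
apply: eq_bigr => u uX; congr (_ * _).
have -> : [set: V] :\ u = (X :\ u) :|: (~: X :\ u).
  apply/finset.setP => w; rewrite in_setD1 in_setT in_setU !in_setD1 in_setC.
  by case: (w == u); case: (w \in X).
rewrite (@Ex_local R V (X :\ u) (~: X :\ u) pv (Lv pi u)) //.
  rewrite -setI_eq0; apply/eqP/finset.setP => w.
  rewrite in_setI !in_setD1 in_setC in_set0.
  by case: (w \in X); rewrite ?andbF.
by move=> A; apply: Lv_local.
Qed.

Lemma V_decX (pi : seq V) : perm_eq pi (enum X) ->
  exp_lat (d r) d X pv pi = \sum_(u in X) pv u * Ex (X :\ u) pv (Lv pi u).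
Proof.
move=> ps; have Hpi : forall w, w \in pi -> w \in X by move=> w; rewrite (perm_mem ps) mem_enum.
by rewrite exp_latE // (perm_big _ ps) big_enum.
Qed.

Lemma consec_tail (y : J) s : consecutive (y :: s) -> consecutive s.
Proof.
move=> H v s1 s2 s3 e h1 h3; apply: (H v (y :: s1) s2 s3) => //.
  by rewrite e.
by rewrite /= in_cons h1 orbT.
Qed.

Lemma blk_ne (s : seq J) u : u \in [seq y.1 | y <- s] -> blk s u != [::].
Proof.
case/mapP => y ys ->; rewrite -has_filter; apply/hasP; exists y => //.
Qed.

Lemma consec_head (y w : J) s : consecutive (y :: w :: s) ->
  y.1 \in [seq z.1 | z <- w :: s] -> w.1 = y.1.
Proof.
move=> H; rewrite /= in_cons; case: (eqVneq y.1 w.1) => [->//|ne] /= hs.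
have := H y.1 [:: y] [:: w] s erefl; rewrite /= in_cons eqxx /= => /(_ isT hs).
by rewrite andbT => /eqP.
Qed.

Lemma blk_nil (s : seq J) u : u \notin [seq z.1 | z <- s] -> blk s u = [::].
Proof.
move=> hu; apply/eqP; rewrite -[_ == _]negbK -has_filter; apply/hasP => [[z zs /eqP ez]].
by move: hu; rewrite -ez map_f.
Qed.

Lemma consec_flat (s : seq J) : consecutive s ->
  s = flatten (map (blk s) (undup [seq y.1 | y <- s])).
Proof.
elim: s => [|y s IH] H //.
have Hs := consec_tail H; have e := IH Hs.
have blk_cons : forall u, blk (y :: s) u = if y.1 == u then y :: blk s u else blk s u.
  by move=> u; rewrite /blk /=.
have ne_rest : forall U, (forall u, u \in U -> y.1 != u) ->
    map (blk (y :: s)) U = map (blk s) U.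
  move=> U hU; apply/eq_in_map => u uU; rewrite blk_cons.
  by rewrite (negPf (hU u uU)).
rewrite /=; case: ifP => hy.
  move: e; set U := undup _; have UU : uniq U by apply: undup_uniq.
  case E: U UU => [|u0 U'] UU e.
    by move: hy; rewrite -mem_undup -/U E.
  have u0s : u0 \in [seq y0.1 | y0 <- s] by rewrite -mem_undup -/U E mem_head.
  have bne := blk_ne u0s.
  case Eb: (blk s u0) bne => [//|w c] _.
  have w1 : w.1 = u0.
    have : w \in blk s u0 by rewrite Eb mem_head.
    by rewrite /blk mem_filter => /andP[/eqP].
  have u0y : u0 = y.1.
    rewrite -w1; move: H hy; rewrite e /= Eb /= => H hy.
    by apply: consec_head H _.
  move: UU; rewrite /= => /andP[u0U' _].
  rewrite -u0y eqxx ne_rest; last first.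
    by move=> u uU; apply/negP => /eqP eu; move: u0U'; rewrite u0y eu uU.
  by rewrite {1}e.
rewrite /= eqxx blk_nil ?hy // ne_rest; first by rewrite /= -e.
by move=> u; rewrite mem_undup => us; apply/negP => /eqP eu; rewrite eu us in hy.
Qed.


Definition shat (sig : seq V) : seq J :=
  flatten (map (fun u => [seq y <- enum SJ | y.1 == u]) sig).

Lemma shat_perm sig : perm_eq sig (enum X) -> perm_eq (shat sig) (enum SJ).
Proof.
move=> ps; apply: uniq_perm; last 2 first.
- exact: enum_uniq.
- move=> y; apply/flattenP/idP.
    by case=> c /mapP[u _ ->]; rewrite mem_filter => /andP[_ ->].
  move=> yS; exists [seq z <- enum SJ | z.1 == y.1]; last by rewrite mem_filter eqxx yS.
  apply/mapP; exists y.1 => //; rewrite (perm_mem ps) mem_enum.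
  by move: yS; rewrite mem_enum memSJ => /andP[].
have : uniq sig by rewrite (perm_uniq ps) enum_uniq.
rewrite /shat; elim: sig {ps} => [//|u sig IH] /= /andP[us usig].
rewrite cat_uniq filter_uniq ?enum_uniq // IH // andbT /=.
apply/hasP => [[y /flattenP[c /mapP[w ws ->] yc] yb]].
move: yc yb; rewrite !mem_filter => /andP[/eqP yw _] /andP[/eqP yu _].
by move: us; rewrite -yu yw ws.
Qed.

Section Facts.
Hypothesis pv01 : forall v, 0 <= pv v <= 1.
Local Notation p := (pJ pv).
Local Notation n := (nV R V).

Lemma drge0 y : 0 <= d r y. Proof. exact: dge0. Qed.
Lemma tr1 y w : d r w <= d r y + d y w. Proof. exact: dtri. Qed.

Lemma n_gt0 (u : V) : 0 < n.
Proof. by rewrite /nV ltr0n; apply/card_gt0P; exists u. Qed.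

Lemma X_pos u : u \in X -> 0 < pv u.
Proof.
rewrite /Xset inE => h; apply: lt_le_trans h.
by rewrite div1r invr_gt0 exprn_gt0 // (n_gt0 u).
Qed.

Lemma pJ_le u : u \in X -> p <= pv u / n.
Proof.
move=> uX; rewrite /pJ div1r mulrC ler_pM2r ?invr_gt0 ?(n_gt0 u) //.
exact: (bigmin_le_cond _ _ uX).
Qed.

Lemma pJ_gt0 u : u \in X -> 0 < p.
Proof.
move=> uX; rewrite /pJ mulr_gt0 // ?div1r ?invr_gt0 ?(n_gt0 u) //.
have h : (0 : R) < 1 / n ^+ 2 by rewrite div1r invr_gt0 exprn_gt0 // (n_gt0 u).
apply: lt_le_trans h _; apply: le_bigmin.
  have := pv01 u; have := X_pos uX; rewrite /Xset inE in uX.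
  by move=> _ /andP[_ h1]; apply: le_trans uX h1.
by move=> v; rewrite /Xset inE.
Qed.

Lemma pJ_le1 u : u \in X -> p <= 1.
Proof.
move=> uX; apply: le_trans (pJ_le uX) _.
have n1 : 1 <= n by rewrite /nV ler1n; apply/card_gt0P; exists u.
have := pv01 u => /andP[h0 h1].
rewrite ler_pdivrMr ?(n_gt0 u) // mul1r; exact: le_trans h1 n1.
Qed.

Lemma m_bounds u : u \in X ->
  pv u <= (t u)%:R * p /\ (t u)%:R * p <= pv u + p.
Proof.
move=> uX; have p0 := pJ_gt0 uX.
have c0 : (0 <= Num.ceil (pv u / p))%R.
  rewrite ceil_ge0; apply: lt_le_trans (_ : (-1 : R) < 0) _; first by rewrite oppr_lt0.
  by apply: divr_ge0; [have := pv01 u => /andP[]|exact: ltW].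
have -> : (t u)%:R = (Num.ceil (pv u / p))%:~R :> R.
  by rewrite /tcopies natr_absz ger0_norm.
split.
  by rewrite -ler_pdivrMr // ceil_ge.
have := ceilB1_lt (pv u / p); rewrite intrB /= => h.
have h2 : (Num.ceil (pv u / p))%:~R < pv u / p + 1 by lra.
rewrite -ler_pdivlMr //; apply: ltW; apply: lt_le_trans h2 _.
by rewrite mulrDl divff ?gt_eqF // mul1r.
Qed.

Lemma q01 u : u \in X -> 0 <= qJ u <= 1.
Proof.
move=> uX; have p0 := pJ_gt0 uX; have p1 := pJ_le1 uX.
have h0 : 0 <= (1 - p) ^+ t u by apply: exprn_ge0; lra.
have h1 : (1 - p) ^+ t u <= 1 by apply: exprn_ile1; lra.
rewrite /qJ; apply/andP; split; lra.
Qed.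

Lemma q_le_m u : u \in X -> qJ u <= (t u)%:R * p.
Proof.
move=> uX; apply: bern; have := pJ_gt0 uX; have := pJ_le1 uX.
move=> h1 h0; apply/andP; split => //; exact: ltW.
Qed.

Lemma q_ge u : u \in X -> (1 - expR (-1)) * pv u <= qJ u.
Proof.
move=> uX; apply: qlow.
- by have := pJ_gt0 uX; have := pJ_le1 uX => h1 h0; rewrite (ltW h0) h1.
- exact: pv01.
- by case: (m_bounds uX).
Qed.


Lemma Lv_ge0 pi u B : 0 <= Lv pi u B.
Proof. by rewrite /Lv latencyE; apply: latrO_ge0; [exact: drge0|exact: dge0]. Qed.

Lemma Ex_ge0 (W : {set V}) (q : V -> R) (pi : seq V) (u : V) : {in W, forall v, 0 <= q v <= 1} -> 0 <= Ex W q (Lv pi u).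
Proof.
move=> q01'; rewrite -(Ex_const W q 0); apply: Ex_le => // A _; exact: Lv_ge0.
Qed.

Lemma Lv_mono (pi : seq V) u (A B : {set V}) : A \subset B -> Lv pi u A <= Lv pi u B.
Proof.
move=> sAB; rewrite /Lv; apply: lat_mono => //.
- exact: drge0.
- exact: dge0.
- exact: tr1.
- exact: dtri.
Qed.

Lemma E_gt2 : 2 * expR (-1) < (1 : R).
Proof.
rewrite expRN1; have := @E_ge R => h.
have E0 : (0 : R) < expR 1 by apply: expR_gt0.
rewrite -[2 * _]/(2 / expR 1) ltr_pdivrMr // mul1r; lra.
Qed.

Lemma inW u w : w \in X :\ u -> w \in X.
Proof. by rewrite in_setD1 => /andP[]. Qed.

Lemma cmp1 (pi : seq V) u (u0 : V) : u0 \in X ->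
  Ex (X :\ u) pv (Lv pi u) <= (1 - 2 * expR (-1))^-1 * Ex (X :\ u) qJ (Lv pi u).
Proof.
move=> u0X; pose a : R := 1 - expR (-1).
have ha : 0 < 2 * a - 1 by rewrite /a; have := E_gt2; lra.
have e1 : expR (-1) <= (1 : R) by rewrite expR_le1 lerN10.
have e0 : (0 : R) <= expR (-1) by apply: expR_ge0.
have pv01W : {in X :\ u, forall y, 0 <= pv y <= 1} by move=> y _; exact: pv01.
have h1 := @thin_Ex R V (d r) d drge0 dge0 (X :\ u) pv (fun _ => a) a pi u.
have h1' : (2 * a - 1) * Ex (X :\ u) pv (Lv pi u) <=
           Ex (X :\ u) (fun y => pv y * a) (Lv pi u).
  apply: h1 => //; first by rewrite /a; lra.
  by move=> y _; apply/andP; split; rewrite /a; lra.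
have h2 : Ex (X :\ u) (fun y => pv y * a) (Lv pi u) <= Ex (X :\ u) qJ (Lv pi u).
  apply: Ex_mono.
  - move=> y _; have := pv01 y => /andP[p0 p1].
    apply/andP; split; first by apply: mulr_ge0 => //; rewrite /a; lra.
    by apply: mulr_ile1 => //; rewrite /a; lra.
  - by move=> y /inW yX; apply: q01.
  - by move=> y /inW yX; rewrite mulrC; apply: q_ge.
  - by move=> A B; apply: Lv_mono.
have -> : 1 - 2 * expR (-1) = 2 * a - 1 by rewrite /a; ring.
rewrite ler_pdivlMl //; exact: le_trans h1' h2.
Qed.

Lemma cmp2 (sig : seq V) u (u0 : V) : u0 \in X -> 1 < n ->
  Ex (X :\ u) qJ (Lv sig u) <= ((n - 1) / (n + 1))^-1 * Ex (X :\ u) pv (Lv sig u).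
Proof.
move=> u0X n1; have n0 : 0 < n by lra.
set c := 1 + n^-1.
have c1 : 1 <= c by rewrite /c lerDl invr_ge0 ltW.
set q' := fun w => Num.min 1 (pv w * c).
set b := fun w => pv w / q' w.
have q'pos : forall w, w \in X -> 0 < q' w.
  move=> w wX; rewrite /q' lt_min ltr01 /=; apply: mulr_gt0; first exact: X_pos.
  lra.
have q'le : forall w, q' w <= pv w * c by move=> w; rewrite /q' ge_min lexx orbT.
have pvq' : forall w, pv w <= q' w.
  move=> w; have := pv01 w => /andP[p0 p1]; rewrite /q' le_min p1 /=.
  by rewrite ler_peMr.
have q'01 : {in X :\ u, forall w, 0 <= q' w <= 1}.
  move=> w /inW wX; rewrite (ltW (q'pos w wX)) /= /q' ge_min lexx //.
have h1 : Ex (X :\ u) qJ (Lv sig u) <= Ex (X :\ u) q' (Lv sig u).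
  apply: Ex_mono => //.
  - by move=> y /inW yX; apply: q01.
  - move=> w /inW wX; rewrite /q' le_min; apply/andP; split.
      by have := q01 wX => /andP[].
    apply: le_trans (q_le_m wX) _.
    case: (m_bounds wX) => _ h; apply: le_trans h _.
    have := pJ_le wX; rewrite /c mulrDr mulr1 => h'; lra.
  - by move=> A B; apply: Lv_mono.
have h2 := @thin_Ex R V (d r) d drge0 dge0 (X :\ u) q' b (c^-1) sig u.
have h2' : (2 * c^-1 - 1) * Ex (X :\ u) q' (Lv sig u) <=
           Ex (X :\ u) (fun y => q' y * b y) (Lv sig u).
  apply: h2 => //.
  - move=> w /inW wX; rewrite /b ler_pdivlMr ?q'pos // mulrC -ler_pdivlMr.
      by rewrite invrK.
    by rewrite invr_gt0; lra.
  - by rewrite invr_le1 // ?unitfE ?gt_eqF //; lra.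
  - move=> w /inW wX; rewrite /b; apply/andP; split.
      by apply: divr_ge0; [have := pv01 w => /andP[]|exact: ltW (q'pos w wX)].
    by rewrite ler_pdivrMr ?q'pos // mul1r.
have e3 : Ex (X :\ u) (fun y => q' y * b y) (Lv sig u) = Ex (X :\ u) pv (Lv sig u).
  apply: Ex_eqq => w /inW wX; rewrite /b mulrC divfK //; by rewrite gt_eqF // q'pos.
have -> : (n - 1) / (n + 1) = 2 * c^-1 - 1.
  by rewrite /c; field; apply/andP; split; rewrite ?gt_eqF //; lra.
have hc : 0 < 2 * c^-1 - 1.
  have -> : 2 * c^-1 - 1 = (n - 1) / (n + 1) by rewrite /c; field; apply/andP; split; rewrite ?gt_eqF //; lra.
  by apply: divr_gt0; lra.
rewrite ler_pdivlMl // -e3; apply: le_trans h2'.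
by apply: ler_wpM2l; [exact: ltW|].
Qed.

End Facts.

End Main.

Local Open Scope classical_set_scope.
Local Open Scope ring_scope.

Lemma constn (R : realType) (n : R) : 2 <= n ->
  (1 + n^-1) * ((n - 1) / (n + 1))^-1 <= 1 + 16 * (n + 1)^-1.
Proof.
move=> n2; rewrite -subr_ge0.
have -> : 1 + 16 * (n + 1)^-1 - (1 + n^-1) * ((n - 1) / (n + 1))^-1 =
   (13 * n ^+ 2 - 20 * n - 1) / (n * (n - 1) * (n + 1)).
  by field; rewrite !gt_eqF //; lra.
apply: divr_ge0; first nra.
apply: mulr_ge0; [apply: mulr_ge0|]; lra.
Qed.

Theorem corollary1 (R : realType) :
  exists f : nat -> R, f @ \oo --> 0 /\
  forall (V : finType) (d : V -> V -> R) (r : V) (pv : V -> R),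
    is_metric d ->
    (forall v, 0 <= pv v <= 1) ->
    forall (rho : R) (sJ : seq (Jtype pv)),
      is_tour (SJ pv) sJ ->
      consecutive sJ ->
      exp_lat (fun x => d r x.1) (fun x y => d x.1 y.1)
              (SJ pv) (fun _ => pJ pv) sJ
        <= rho * OPT (fun x => d r x.1) (fun x y => d x.1 y.1)
                     (SJ pv) (fun _ => pJ pv) ->
      exp_lat (d r) d [set: V] pv (induced_tour sJ)
        <= (1 + f #|V|) * (expR 1 / (expR 1 - 1)) ^+ 4 * rho
           * OPT (d r) d (Xset pv) pv.
Proof.
exists (fun n : nat => 16 * (n.+1%:R)^-1); split; first exact: flim.
move=> V d r pv md pv01 rho sJ [sJu sJm] consJ hJ.
set X := Xset pv; set pi := induced_tour sJ.
have piX : forall u, u \in pi -> u \in X.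
  move=> u; rewrite mem_undup => /mapP[y ys ->].
  by move: ys; rewrite sJm memSJ => /andP[].
have dge := dge0 md; have dsy := dsym md; have dtr := dtri md.
have hd0 : forall z y, d r z = 0 -> d r y = 0 -> d z y = 0.
  move=> z y hz hy; apply/eqP; rewrite eq_le dge andbT.
  by have := dtr z r y; rewrite (dsy z r) hz hy addr0.
have OPTX0 : 0 <= OPT (d r) d X pv.
  by apply: OPT_ge0 => // v _; exact: pv01.
case: (pselect (exists u0, u0 \in X /\ d r u0 <> 0)) => [[u0 [u0X du0]]|nE]; last first.
  have hA : forall u, u \in X -> d r u = 0.
    move=> u uX; case: (eqVneq (d r u) 0) => // h; exfalso; apply: nE; exists u; split => //; exact/eqP.
  rewrite exp_lat_zero //; last by move=> y /piX; exact: hA.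
  have -> : OPT (d r) d X pv = 0.
    apply/eqP; rewrite eq_le OPTX0 andbT.
    apply: le_trans (@OPT_le _ _ (d r) d X pv (enum X) (perm_refl _)) _.
    by rewrite exp_lat_zero // => y; rewrite mem_enum; exact: hA.
  by rewrite mulr0.
have du0p : 0 < d r u0 by rewrite lt_neqAle dge eq_sym andbT; apply/eqP.
have n1 : (1 < #|V|)%N.
  apply/card_gt1P; exists u0, r; split => //; apply/eqP => e.
  by apply: du0; rewrite e (d0 md).
have n2 : (2 : R) <= nV R V by rewrite /nV (ler_nat R 2).
have p0 := pJ_gt0 pv01 u0X; have p1 := pJ_le1 pv01 u0X.
have q01' : {in SJ pv, forall y, 0 <= (fun=> pJ pv) y <= 1}.
  by move=> y _; rewrite (ltW p0) p1.
have drJ : forall y : Jtype pv, 0 <= d r y.1 by move=> y; exact: dge.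
have dJ : forall y z : Jtype pv, 0 <= d y.1 z.1 by move=> y z; exact: dge.
have piperm : perm_eq pi (enum X).
  apply: uniq_perm; [exact: undup_uniq|exact: enum_uniq|] => u.
  rewrite mem_enum; apply/idP/idP; first exact: piX.
  move=> uX; have [hm _] := m_bounds pv01 uX.
  have tpos : (0 < tcopies pv u)%N.
    rewrite lt0n; apply/negP => /eqP t0; move: hm; rewrite t0 mul0r => hm.
    by have := X_pos uX; lra.
  have K0 : (0 < Kbound pv)%N := leq_trans tpos (t_le_K pv u).
  pose y : Jtype pv := (u, Ordinal K0).
  have yS : y \in SJ pv by rewrite memSJ /= uX tpos.
  by rewrite mem_undup; apply/mapP; exists y; rewrite ?sJm.
have sJperm : perm_eq sJ (enum (SJ pv)).
  by apply: uniq_perm => //; [exact: enum_uniq|move=> y; rewrite sJm mem_enum].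
have H1 : forall u (y : Jtype pv), y \in blk sJ u -> y.1 = u.
  by move=> u y; rewrite /blk mem_filter => /andP[/eqP].
have H2 : forall y, y \in SJ pv -> y \in blk sJ y.1.
  by move=> y yS; rewrite /blk mem_filter eqxx sJm.
have ecJ := J_dec r md (consec_flat consJ) H1 H2 piX sJperm.
set costJ := exp_lat (fun x => d r x.1) (fun x y => d x.1 y.1) (SJ pv) (fun _ => pJ pv) sJ in hJ ecJ *.
set OPTJ := OPT (fun x => d r x.1) (fun x y => d x.1 y.1) (SJ pv) (fun _ => pJ pv) in hJ *.
set K1 := (1 - 2 * expR (-1))^-1 : R.
have eg2 := @E_gt2 R.
have K1pos : 0 < K1 by rewrite /K1 invr_gt0; lra.
have pvX : {in X, forall v, 0 <= pv v <= 1} by move=> v _; exact: pv01.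
have qX : forall u, {in X :\ u, forall v, 0 <= qJ pv v <= 1}.
  move=> u v /inW vX; exact: (@q01 R V pv pv01 v vX).
have L1 : exp_lat (d r) d [set: V] pv pi <= K1 * costJ.
  rewrite (V_decT d r piperm) ecJ mulr_sumr; apply: ler_sum => u uX.
  have [hm _] := m_bounds pv01 uX.
  have e1 := cmp1 r md pv01 pi u u0X.
  have g1 : 0 <= Ex (X :\ u) pv (Lv d r pi u).
    exact: (@Ex_ge0 R V d r md (X :\ u) pv pi u (fun v _ => pv01 v)).
  apply: (le_trans (ler_pM _ g1 hm e1)); first by have := pv01 u => /andP[].
  by rewrite /K1 /pi le_eqVlt; apply/orP; left; apply/eqP; ring.
have OJ0 : 0 <= OPTJ by apply: OPT_ge0.
have cJpos : 0 < costJ.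
  rewrite ecJ (bigD1 u0) //=.
  have [hm _] := m_bounds pv01 u0X.
  have Eg : d r u0 <= Ex (X :\ u0) (qJ pv) (Lv d r pi u0).
    rewrite -(Ex_const (X :\ u0) (qJ pv) (d r u0)); apply: Ex_le => // A _.
    rewrite /Lv; apply: lat_ge. all: try (by []).
    by rewrite (perm_mem piperm) mem_enum.
  have rest : 0 <= \sum_(i in X | i != u0)
      (tcopies pv i)%:R * (pJ pv * Ex (X :\ i) (qJ pv) (Lv d r pi i)).
    apply: sumr_ge0 => u /andP[uX _]; apply: mulr_ge0 => //.
    apply: mulr_ge0; first exact: ltW.
    exact: (@Ex_ge0 R V d r md (X :\ u) (qJ pv) pi u (qX u)).
  have pu0 := X_pos u0X.
  have : 0 < pv u0 * d r u0 by apply: mulr_gt0.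
  have : pv u0 * d r u0 <= (tcopies pv u0)%:R * pJ pv * Ex (X :\ u0) (qJ pv) (Lv d r pi u0).
    by apply: ler_pM => //; exact: ltW.
  move: rest; rewrite /pi /X mulrA => r1 h1 h2; lra.
have rho0 : 0 <= rho.
  case: (lerP 0 rho) => // rn; have := mulr_le0_ge0 (ltW rn) OJ0; lra.
have [sig sigperm esig] := @OPT_att _ _ (d r) d X pv.
have shp := shat_perm sigperm.
have OJle : OPTJ <= exp_lat (fun x => d r x.1) (fun x y => d x.1 y.1) (SJ pv) (fun _ => pJ pv) (shat pv sig).
  exact: (@OPT_le _ _ (fun x => d r x.1) (fun x y => d x.1 y.1) (SJ pv) (fun _ => pJ pv) (shat pv sig) shp).
have H1' : forall u (y : Jtype pv), y \in [seq z <- enum (SJ pv) | z.1 == u] -> y.1 = u.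
  by move=> u y; rewrite mem_filter => /andP[/eqP].
have H2' : forall y, y \in SJ pv -> y \in [seq z <- enum (SJ pv) | z.1 == y.1].
  by move=> y yS; rewrite mem_filter eqxx mem_enum.
have sigX : forall u, u \in sig -> u \in X by move=> u; rewrite (perm_mem sigperm) mem_enum.
have ecS := @J_dec R V d r pv md (shat pv sig) (fun u => [seq z <- enum (SJ pv) | z.1 == u]) sig
   (erefl _) H1' H2' sigX shp.
set n := nV R V.
have n1' : 1 < n by lra.
set c := 1 + n^-1.
set K2 := ((n - 1) / (n + 1))^-1.
have K2pos : 0 < K2 by rewrite /K2 invr_gt0; apply: divr_gt0; lra.
have Cb : exp_lat (fun x => d r x.1) (fun x y => d x.1 y.1) (SJ pv) (fun _ => pJ pv) (shat pv sig)
    <= c * K2 * OPT (d r) d X pv.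
  rewrite ecS esig (V_decX d r sigperm) mulr_sumr; apply: ler_sum => u uX.
  have [_ hm] := m_bounds pv01 uX.
  have hp := pJ_le uX.
  have hm' : (tcopies pv u)%:R * pJ pv <= pv u * c.
    by apply: le_trans hm _; rewrite /c mulrDr mulr1 lerD2l.
  have e2 := cmp2 r md pv01 sig u u0X n1'.
  have g2 : 0 <= Ex (X :\ u) (qJ pv) (Lv d r sig u) by exact: (@Ex_ge0 R V d r md (X :\ u) (qJ pv) sig u (qX u)).
  apply: (le_trans (_ : _ <= (pv u * c) * (K2 * Ex (X :\ u) pv (Lv d r sig u)))).
    rewrite mulrA; apply: ler_pM => //; apply: mulr_ge0 => //; exact: ltW.
  by rewrite le_eqVlt; apply/orP; left; apply/eqP; ring.
have main : exp_lat (d r) d [set: V] pv pi <= K1 * (rho * (c * K2 * OPT (d r) d X pv)).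
  apply: le_trans L1 _; apply: ler_wpM2l; first exact: ltW.
  apply: le_trans hJ _; apply: ler_wpM2l => //.
  exact: le_trans OJle Cb.
apply: le_trans main _.
have hK1 : K1 <= (expR 1 / (expR 1 - 1)) ^+ 4 := @constK R.
have hc : c * K2 <= 1 + 16 * (n + 1)^-1 by apply: constn.
have -> : (#|V|.+1%:R : R) = n + 1 by rewrite /n /nV -natr1.
have ro : 0 <= rho * OPT (d r) d X pv by apply: mulr_ge0.
have cK0 : 0 <= c * K2 by apply: mulr_ge0; [rewrite /c; apply: addr_ge0 => //; rewrite invr_ge0; lra|exact: ltW].
apply: (le_trans (_ : _ <= K1 * (c * K2) * (rho * OPT (d r) d X pv))).
  by rewrite le_eqVlt; apply/orP; left; apply/eqP; ring.
apply: (le_trans (_ : _ <= (expR 1 / (expR 1 - 1)) ^+ 4 * (1 + 16 * (n + 1)^-1) * (rho * OPT (d r) d X pv))).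
  apply: ler_wpM2r => //; apply: ler_pM => //; exact: ltW.
by rewrite le_eqVlt; apply/orP; left; apply/eqP; ring.
Qed.
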